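(* Let $k\ge 2$ be an integer, and let $\hat m_k$ denote the nonzero mode value at the first double mode of the Poisson distribution of order $k$ (as defined in the context). Then $$k \le \hat m_k < \kappa, \qquad \text{where } \kappa = \frac{k(k+1)}{2}.$$
   Context: For an integer $k\ge1$ and a real $\lambda>0$, the Poisson distribution of order $k$ with parameter $\lambda$ is the distribution on $\{0,1,2,\dots\}$ with probability mass function $$f_k(n;\lambda)=e^{-k\lambda}\sum_{\substack{n_1,\dots,n_k\ge 0\\ n_1+2n_2+\dots+kn_k=n}}\frac{\lambda^{n_1+\dots+n_k}}{n_1!\cdots n_k!},\qquad n=0,1,2,\dots$$ A mode is any $n$ at which $f_k(n;\lambda)$ attains its global maximum over $n\ge0$. The distribution has a double mode at $m_1\neq m_2$ if $m_1$ and $m_2$ are exactly the two modes. The ''first double mode'' refers to the smallest value of $\lambda>0$, denoted $\hat\lambda_k$, at which the distribution has a double mode; at this value the two modes are $0$ and a positive integer, denoted $\hat m_k$. *)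

(* Defs.v *)
From HB Require Import structures.
From mathcomp Require Import all_boot all_order all_algebra.
From mathcomp Require Import all_classical all_reals all_analysis.
Set Implicit Arguments. Unset Strict Implicit. Unset Printing Implicit Defensive.
Import Order.TTheory GRing.Theory Num.Theory.
Local Open Scope ring_scope.

(* The tuples (n_1,...,n_k) with n_1 + 2 n_2 + ... + k n_k = n have every
   n_i <= n, so they are enumerated as v : {ffun 'I_k -> 'I_n.+1},
   with n_{i+1} = v i. *)
Definition poisk_pmf (R : realType) (k : nat) (lam : R) (n : nat) : R :=
  expR (- (k%:R * lam)) *
  \sum_(v : {ffun 'I_k -> 'I_n.+1} | (\sum_(i < k) i.+1 * v i)%N == n)
     lam ^+ (\sum_(i < k) (v i : nat))%N / (\prod_(i < k) (v i)`!)%:R.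

Definition is_mode (R : realType) (k : nat) (lam : R) (n : nat) : Prop :=
  forall n' : nat, poisk_pmf k lam n' <= poisk_pmf k lam n.

Definition double_mode (R : realType) (k : nat) (lam : R) (m1 m2 : nat) : Prop :=
  m1 <> m2 /\ is_mode k lam m1 /\ is_mode k lam m2 /\
  (forall n, is_mode k lam n -> n = m1 \/ n = m2).

Definition has_double_mode (R : realType) (k : nat) (lam : R) : Prop :=
  exists m1 m2, double_mode k lam m1 m2.

Definition first_double_mode (R : realType) (k : nat) (lam : R) : Prop :=
  0 < lam /\ has_double_mode k lam /\
  (forall mu : R, 0 < mu -> mu < lam -> ~ has_double_mode k mu).

(* Main.v *)
Require Import Defs.
From HB Require Import structures.
From mathcomp Require Import all_boot all_order all_algebra.
From mathcomp Require Import all_classical all_reals all_analysis.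
From mathcomp Require Import ring lra zify.
From Stdlib Require Import Lia.
Import Order.TTheory GRing.Theory Num.Theory.
Local Open Scope ring_scope.

Definition cc {R : realType} (lam : R) (t : nat) : R := lam ^+ t / (t`!)%:R.
Definition PP {R : realType} (lam : R) (N i : nat) : {poly R} :=
  \sum_(t < N.+1) cc lam t *: 'X^(i.+1 * t).
Definition QQ {R : realType} (lam : R) (N k : nat) : {poly R} :=
  \prod_(i < k) PP lam N i.
Definition AA {R : realType} (k : nat) : {poly R} :=
  \sum_(i < k) i.+1%:R *: 'X^(i.+1).

Lemma cc_succ {R : realType} (lam : R) t : cc lam t.+1 *+ t.+1 = lam * cc lam t.
Proof.
rewrite /cc factS natrM exprS -mulr_natr.
have h1 : (t.+1%:R : R) != 0 by rewrite pnatr_eq0.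
have h2 : ((t`!)%:R : R) != 0 by rewrite pnatr_eq0 -lt0n fact_gt0.
field.
by rewrite h2 addrC natr1 h1.
Qed.

Lemma XP {R : realType} (lam : R) N i : exists T,
  'X * (PP lam N i)^`() = (i.+1%:R * lam) *: ('X^(i.+1) * PP lam N i) + 'X^(N.+1) * T.
Proof.
pose f t := (cc lam t *+ (i.+1 * t)) *: ('X^(i.+1 * t) : {poly R}).
have ha : 'X * (PP lam N i)^`() = \sum_(t < N.+1) f t.
  rewrite /PP raddf_sum mulr_sumr; apply: eq_bigr => t _.
  rewrite /= derivZ derivXn -scalerAr /f -scalerMnl scalerMnr; congr (_ *: _).
  case: (i.+1 * t)%N => [|m]; first by rewrite !mulr0n mulr0.
  by rewrite mulrnAr -exprS.
have hb : \sum_(t < N.+2) f t = (i.+1%:R * lam) *: ('X^(i.+1) * PP lam N i).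
  rewrite big_ord_recl /f muln0 mulr0n scale0r add0r /PP mulr_sumr scaler_sumr.
  apply: eq_bigr => t _ /=.
  rewrite -scalerAr scalerA -exprD -mulnS /bump /=.
  congr (_ *: _).
  rewrite mulnC mulrnA cc_succ -mulr_natl; ring.
exists (- ((cc lam N.+1 *+ (i.+1 * N.+1)) *: 'X^(i * N.+1))).
rewrite ha -hb (big_ord_recr N.+1) /= /f mulrN -scalerAr -exprD -mulSn addrK.
by [].
Qed.

Lemma XQ {R : realType} (lam : R) N k : exists S,
  'X * (QQ lam N k)^`() = lam *: (@AA R k * QQ lam N k) + 'X^(N.+1) * S.
Proof.
elim: k => [|k [S HS]].
  by exists 0; rewrite /QQ /AA !big_ord0 derivC mulr0 mul0r scaler0 mulr0 addr0.
have [T HT] := XP lam N k.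
exists (S * PP lam N k + QQ lam N k * T).
rewrite /QQ /AA !big_ord_recr /= derivM mulrDr mulrA HS mulrCA HT.
rewrite -/(QQ lam N k) -/(@AA R k) -!mul_polyC polyCM.
ring.
Qed.

Lemma coefQ {R : realType} (lam : R) N k n : (n <= N)%N ->
  (QQ lam N k)`_n *+ n = lam * \sum_(i < k) i.+1%:R *
     (if (n < i.+1)%N then 0 else (QQ lam N k)`_(n - i.+1)).
Proof.
move=> nN; have [S HS] := XQ lam N k.
have := congr1 (fun p : {poly R} => p`_n) HS.
rewrite coefXM coefD coefZ coefXnM ltnS nN addr0 /AA mulr_suml coef_sum => H.
case: n nN H => [|n] nN /= H.
  rewrite mulr0n [LHS]H; congr (_ * _); apply: eq_bigr => i _.
  by rewrite -scalerAl coefZ coefXnM.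
rewrite -coef_deriv H; congr (_ * _); apply: eq_bigr => i _.
by rewrite -scalerAl coefZ coefXnM.
Qed.

Lemma coefQ0 {R : realType} (lam : R) N k : (QQ lam N k)`_0 = 1.
Proof.
elim: k => [|k IH]; first by rewrite /QQ big_ord0 coefC.
rewrite /QQ big_ord_recr /= coef0M -/(QQ lam N k) IH mul1r.
rewrite /PP coef_sum big_ord_recl /= coefZ coefXn muln0 eqxx /cc expr0 fact0 divr1 mulr1.
rewrite big1 ?addr0 // => t _; rewrite coefZ coefXn; have -> : (0 == k.+1 * bump 0 t)%N = false by rewrite /bump /=; lia.
by rewrite mulr0.
Qed.

Lemma QQ_consistent {R : realType} (lam : R) k b : forall n N M,
  (n <= b)%N -> (n <= N)%N -> (n <= M)%N -> (QQ lam N k)`_n = (QQ lam M k)`_n.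
Proof.
elim: b => [|b IH] n N M.
  by rewrite leqn0 => /eqP -> _ _; rewrite !coefQ0.
case: n => [|n] nb nN nM; first by rewrite !coefQ0.
have h1 := @coefQ R lam N k n.+1 nN; have h2 := @coefQ R lam M k n.+1 nM.
have e : (QQ lam N k)`_n.+1 *+ n.+1 = (QQ lam M k)`_n.+1 *+ n.+1.
  rewrite h1 h2; congr (_ * _); apply: eq_bigr => i _.
  case: ifP => // hi; congr (_ * _); rewrite subSS; apply: IH.
  - exact: leq_trans (leq_subr _ _) _.
  - exact: leq_trans (leq_subr _ _) (ltnW nN).
  - exact: leq_trans (leq_subr _ _) (ltnW nM).
have nz : (n.+1%:R : R) != 0 by rewrite pnatr_eq0.
by apply: (mulIf nz); rewrite !mulr_natr.
Qed.


Definition qq {R : realType} (lam : R) k n := (QQ lam n k)`_n.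

Lemma qq_rec {R : realType} (lam : R) k n :
  qq lam k n *+ n = lam * \sum_(i < k) i.+1%:R *
     (if (n < i.+1)%N then 0 else qq lam k (n - i.+1)).
Proof.
rewrite /qq coefQ //; congr (_ * _); apply: eq_bigr => i _.
case: ifP => // hi; congr (_ * _); apply: (@QQ_consistent R lam k (n - i.+1) (n - i.+1)) => //.
exact: leq_subr.
Qed.

Lemma qq_sum {R : realType} (lam : R) k n : qq lam k n =
  \sum_(v : {ffun 'I_k -> 'I_n.+1} | (\sum_(i < k) i.+1 * v i)%N == n)
     lam ^+ (\sum_(i < k) (v i : nat))%N / (\prod_(i < k) (v i)`!)%:R.
Proof.
rewrite /qq /QQ /PP bigA_distr_bigA /= coef_sum [RHS]big_mkcond /=; apply: eq_bigr => v _.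
rewrite scaler_prod prodrXr coefZ coefXn eq_sym.
case: eqP => _; last by rewrite mulr0.
by rewrite mulr1 /cc big_split /= prodrXr prodfV natr_prod.
Qed.

Lemma pmf_qq {R : realType} (lam : R) k n :
  poisk_pmf k lam n = expR (- (k%:R * lam)) * qq lam k n.
Proof. by rewrite /poisk_pmf qq_sum. Qed.

Lemma qq_ge0 {R : realType} (lam : R) k n : 0 <= lam -> 0 <= qq lam k n.
Proof.
move=> l0; rewrite qq_sum; apply: sumr_ge0 => v _.
by apply: divr_ge0; [exact: exprn_ge0 | exact: ler0n].
Qed.

Lemma qq_recW {R : realType} (lam : R) k n : (n <= k)%N ->
  qq lam k n *+ n = lam * \sum_(0 <= i < n) (n - i)%:R * qq lam k i.
Proof.
move=> nk; rewrite qq_rec; congr (_ * _).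
rewrite -(big_mkord xpredT (fun i => i.+1%:R * (if (n < i.+1)%N then 0 else qq lam k (n - i.+1)))).
rewrite (big_cat_nat (leq0n n) nk) /=.
have -> : \sum_(n <= i < k) i.+1%:R * (if (n < i.+1)%N then 0 else qq lam k (n - i.+1)) = 0.
  by rewrite big_nat_cond big1 // => i /andP[/andP[ni _] _]; rewrite ltnS ni mulr0.
rewrite addr0.
rewrite big_nat_rev /=; apply: eq_big_nat => i /andP[_ hi].
rewrite add0n.
have e1 : ((n - i.+1).+1 = n - i)%N by lia.
have e2 : (n < n - i)%N = false by lia.
have e3 : (n - (n - i) = i)%N by lia.
by rewrite e1 e2 e3.
Qed.

Lemma W_succ {R : realType} (q : nat -> R) n :
  \sum_(0 <= i < n.+1) (n.+1 - i)%:R * q i =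
  \sum_(0 <= i < n) (n - i)%:R * q i + \sum_(0 <= i < n.+1) q i.
Proof.
rewrite big_nat_recr //= [\sum_(0 <= i < n.+1) q i]big_nat_recr //= subSnn mul1r addrA.
congr (_ + _); rewrite -big_split /=; apply: eq_big_nat => i /andP[_ hi].
by rewrite subSn ?(ltnW hi) // -addn1 natrD mulrDl mul1r.
Qed.

Lemma tri_sum k : (\sum_(i < k) i.+1)%N = (k * k.+1 %/ 2)%N.
Proof.
have h : ((\sum_(i < k) i.+1) * 2 = k * k.+1)%N.
  elim: k => [|k IH]; first by rewrite big_ord0.
  rewrite big_ord_recr /= mulnDl IH; lia.
by rewrite -h mulnK.
Qed.

Theorem proposition1 (R : realType) (k : nat) (lamhat : R) (mhat : nat) :
  (2 <= k)%N ->
  first_double_mode k lamhat ->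
  double_mode k lamhat 0%N mhat ->
  (0 < mhat)%N ->
  (k <= mhat)%N /\ (mhat < k * k.+1 %/ 2)%N.
Proof.
move=> k2 [l0 _] [m0 [mode0 [modem only]]] mpos.
set q := qq lamhat k.
have e0 : 0 < expR (- (k%:R * lamhat)) := expR_gt0 _.
have q0 : q 0 = 1 by rewrite /q /qq coefQ0.
have qge0 : forall n, 0 <= q n by move=> n; apply: qq_ge0; exact: ltW.
have qle : forall n, q n <= 1.
  by move=> n; have := mode0 n; rewrite !pmf_qq ler_pM2l // -/q q0.
have qm : q mhat = 1.
  by apply/le_anti; rewrite qle /= -q0; have := modem 0; rewrite !pmf_qq ler_pM2l.
have onlyq : forall n, (forall n', q n' <= q n) -> n = 0%N \/ n = mhat.
  move=> n H; apply: only => n'; rewrite !pmf_qq ler_pM2l //; exact: H.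
have lower : (k <= mhat)%N.
  rewrite leqNgt; apply/negP => mk.
  set m := mhat in mk qm mpos *.
  have hA := @qq_recW R lamhat k m (ltnW mk).
  have hC := @qq_recW R lamhat k m.+1 mk; rewrite W_succ in hC.
  rewrite -/q in hA hC.
  set W := \sum_(0 <= i < m) _ in hA hC.
  set T := \sum_(0 <= i < m.+1) _ in hC.
  set U := \sum_(0 <= i < m) q i.
  have hT : T = U + 1 by rewrite /T big_nat_recr //= -/q qm.
  have hW : W <= m%:R * U.
    rewrite /U mulr_sumr; apply: ler_sum_nat => i /andP[_ hi].
    by rewrite -/q ler_wpM2r // ler_nat leq_subr.
  rewrite qm in hA.
  rewrite -mulr_natr hT in hC.
  have mR : 0 < (m%:R : R) by rewrite ltr0n.
  have q1 := qle m.+1.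
  have hU : 1 <= lamhat * U by nra.
  rewrite -natr1 in hC.
  nra.
split=> //.
have q1 : q 1 = lamhat.
  have := qq_rec lamhat k 1; rewrite -/q mulr1n => ->.
  have [k' ek] : exists k', k = k'.+1 by exists k.-1; lia.
  rewrite [in X in _ * X = _]ek big_ord_recl /= big1 ?addr0; last by move=> i _; rewrite mulr0.
  by rewrite mul1r subnn /= q0 mulr1.
have l1 : lamhat < 1.
  rewrite lt_neqAle -q1 qle andbT; apply/eqP => h1.
  have := onlyq 1%N; case.
  - by move=> n'; rewrite h1.
  - by [].
  - move=> e; move: lower; rewrite -e; lia.
have hm := qq_rec lamhat k mhat; rewrite -/q qm in hm.
have hle : (mhat%:R : R) <= lamhat * (\sum_(i < k) i.+1)%:R.
  rewrite hm natr_sum; apply: ler_wpM2l; first exact: ltW.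
  apply: ler_sum => i _; rewrite -[X in _ <= X]mulr1; apply: ler_wpM2l => //.
  by case: ifP => // _; exact: qle.
have Kpos : (0 : R) < (\sum_(i < k) i.+1)%:R.
  have [k' ek] : exists k', k = k'.+1 by exists k.-1; lia.
  by rewrite ltr0n ek big_ord_recl.
rewrite -tri_sum -(ltr_nat R).
nra.
Qed.
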